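(* Let $\mathcal D$ be partitioned into rectangles $K_{ij}$, let $V_h^k$ be the space of piecewise polynomials of degree at most $k$ on this mesh, $\mathbf V_h^k$ the $M$-vectors with entries in $V_h^k$, and let $\mathbf A(\mathbf x)=(a_{kj})$ be a symmetric positive definite $M\times M$ matrix function, smooth on each cell, with $\bar{\mathbf A}$ the matrix of gradients $(\nabla a_{kl})$. Let $\Delta t>0$ be a uniform time step and consider the fully discrete LDG–leapfrog scheme: find $\widehat{\mathbf v}_h^{n+1}\in\mathbf V_h^k$ and $\widehat{\mathbf S}_h^n\in(\mathbf V_h^k)^2$ such that for every cell $K$ with outward normal $\boldsymbol\nu$, $$\int_K\frac{\widehat{\mathbf v}_h^{n+1}-2\widehat{\mathbf v}_h^n+\widehat{\mathbf v}_h^{n-1}}{(\Delta t)^2}\cdot\mathbf p_h\,d\mathbf x+\int_K\mathbf A\widehat{\mathbf S}_h^n\cdot\nabla\mathbf p_h\,d\mathbf x-\big(\mathbf A^-(\widehat{\mathbf S}_h^n)^-\boldsymbol\nu,\mathbf p_h\big)_{\partial K}=0\quad\forall\mathbf p_h\in\mathbf V_h^k,$$ $$\int_K\widehat{\mathbf S}_h^n\cdot\mathbf w_h\,d\mathbf x+\int_K\mathbf A\widehat{\mathbf v}_h^n\cdot\operatorname{div}\mathbf w_h\,d\mathbf x+\int_K\bar{\mathbf A}\widehat{\mathbf v}_h^n\cdot\mathbf w_h\,d\mathbf x-\big(\mathbf A(\widehat{\mathbf v}_h^n)^+,\mathbf w_h\boldsymbol\nu\big)_{\partial K}=0\quad\forall\mathbf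 w_h\in(\mathbf V_h^k)^2,$$ with alternating traces ($-$: left/lower, $+$: right/upper) and homogeneous Dirichlet boundary conditions on $\partial\mathcal D$. Then the fully discrete energy $$E_h^{n+1}=\Big\|\frac{\widehat{\mathbf v}_h^{n+1}-\widehat{\mathbf v}_h^n}{\Delta t}\Big\|^2+\Big\|\frac{\widehat{\mathbf S}_h^{n+1}+\widehat{\mathbf S}_h^n}{2}\Big\|^2-\frac{(\Delta t)^2}{4}\Big\|\frac{\widehat{\mathbf S}_h^{n+1}-\widehat{\mathbf S}_h^n}{\Delta t}\Big\|^2$$ (with $\|\cdot\|$ the $L^2(\mathcal D)$ norm) is conserved by the scheme for all $n$, i.e. $E_h^{n+1}=E_h^n$.
   Context: The scheme discretizes the stochastic Galerkin system $\partial_t^2\widehat{\mathbf v}=\operatorname{div}(\mathbf A\widehat{\mathbf S})$, $\widehat{\mathbf S}=\mathbf A\nabla\widehat{\mathbf v}$ with $\widehat{\mathbf v}=0$ on $\partial\mathcal D$, where $a_{kj}(\mathbf x)=\int a(\mathbf x,\mathbf y)\Phi_k\Phi_j\rho\,d\mathbf y$. In the boundary term of the second equation $\mathbf A$ is evaluated from inside the cell; $\mathbf A^-$ has entries $a_{kj}^-$. ''$\cdot$'' denotes the Euclidean/Frobenius inner product, and divergence/gradient act row-wise. $\widehat{\mathbf v}_h^n,\widehat{\mathbf S}_h^n$ are the approximations at $t_n=n\Delta t$. *)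

(* Defs.v *)
From Stdlib Require Import Reals Arith List.
From Coquelicot Require Import Coquelicot.
Import ListNotations.
Open Scope R_scope.

Fixpoint sumR (n : nat) (f : nat -> R) : R :=
  match n with O => 0 | S n' => sumR n' f + f n' end.

Definition fun2 := R -> R -> R.
(* a broken (piecewise) function: cell (i,j) |-> its polynomial/smooth piece *)
Definition dgfun := nat -> nat -> fun2.

Definition dxp (f : fun2) : fun2 := fun x y => Derive (fun t => f t y) x.
Definition dyp (f : fun2) : fun2 := fun x y => Derive (fun t => f x t) y.
Definition pd (d : nat) (f : fun2) : fun2 :=
  match d with O => dxp f | _ => dyp f end.

Fixpoint dpart (s : list bool) (f : fun2) : fun2 :=
  match s with
  | nil => f
  | b :: s' => if b then dxp (dpart s' f) else dyp (dpart s' f)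
  end.

Definition smooth2 (f : fun2) : Prop :=
  forall (s : list bool) (x y : R),
    ex_derive (fun t => dpart s f t y) x /\
    ex_derive (fun t => dpart s f x t) y /\
    continuous (fun p : R * R => dpart s f (fst p) (snd p)) (x, y).

Definition poly2 (k : nat) (f : fun2) : Prop :=
  exists c : nat -> nat -> R, forall x y,
    f x y = sumR (S k) (fun a => sumR (S k - a) (fun b => c a b * x ^ a * y ^ b)).

Definition in_cell (xg yg : nat -> R) (i j : nat) (x y : R) : Prop :=
  xg i <= x <= xg (S i) /\ yg j <= y <= yg (S j).

Definition cell_int (xg yg : nat -> R) (i j : nat) (g : fun2) : R :=
  RInt (fun x => RInt (fun y => g x y) (yg j) (yg (S j))) (xg i) (xg (S i)).

Definition in_Vh (Nx Ny k : nat) (u : dgfun) : Prop :=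
  forall i j, (i < Nx)%nat -> (j < Ny)%nat -> poly2 k (u i j).
Definition in_VhM (Nx Ny M k : nat) (u : nat -> dgfun) : Prop :=
  forall m, (m < M)%nat -> in_Vh Nx Ny k (u m).
Definition in_VhM2 (Nx Ny M k : nat) (w : nat -> nat -> dgfun) : Prop :=
  forall m d, (m < M)%nat -> (d < 2)%nat -> in_Vh Nx Ny k (w m d).

(* Coefficient matrix, given cellwise: A i j k l x y = a_kl(x,y) on K_ij
   (smooth on each cell, possibly discontinuous across cells). *)
Definition coefmat := nat -> nat -> nat -> nat -> fun2.

Definition spd_on_cell (xg yg : nat -> R) (M : nat) (A : coefmat) (i j : nat) : Prop :=
  forall x y, in_cell xg yg i j x y ->
    (forall k l, (k < M)%nat -> (l < M)%nat -> A i j k l x y = A i j l k x y) /\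
    (forall xi : nat -> R, (exists m, (m < M)%nat /\ xi m <> 0) ->
       0 < sumR M (fun k => sumR M (fun l => xi k * A i j k l x y * xi l))).

(* S-hat = S^- (left/lower cell), with A^- from that same cell; on the
   boundary of D (no left/lower neighbour) the interior trace is used
   (Nat.pred 0 = 0).
   v-hat = v^+ (right/upper cell); on the boundary of D, v-hat = 0
   (homogeneous Dirichlet). *)
Definition vhat_right (Nx : nat) (u : dgfun) (i j : nat) : fun2 :=
  fun x y => if Nat.eqb (S i) Nx then 0 else u (S i) j x y.
Definition vhat_left (u : dgfun) (i j : nat) : fun2 :=
  fun x y => if Nat.eqb i 0 then 0 else u i j x y.
Definition vhat_top (Ny : nat) (u : dgfun) (i j : nat) : fun2 :=
  fun x y => if Nat.eqb (S j) Ny then 0 else u i (S j) x y.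
Definition vhat_bottom (u : dgfun) (i j : nat) : fun2 :=
  fun x y => if Nat.eqb j 0 then 0 else u i j x y.

(* Left-hand side of the first equation on cell K_ij, tested with p.
   vm, vc, vp = v^{n-1}, v^n, v^{n+1};  Sc = S^n  (Sc l d = component (l,d)). *)
Definition ldg_eq1 (xg yg : nat -> R) (M : nat) (A : coefmat) (dt : R)
  (vm vc vp : nat -> dgfun) (Sc : nat -> nat -> dgfun) (p : nat -> dgfun)
  (i j : nat) : R :=
  let xl := xg i in let xr := xg (S i) in
  let yb := yg j in let yt := yg (S j) in
  let il := Nat.pred i in let jb := Nat.pred j in
  cell_int xg yg i j (fun x y => sumR M (fun k =>
      (vp k i j x y - 2 * vc k i j x y + vm k i j x y) / dt ^ 2 * p k i j x y))
  + cell_int xg yg i j (fun x y => sumR M (fun k => sumR 2 (fun d => sumR M (fun l =>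
      A i j k l x y * Sc l d i j x y * pd d (p k i j) x y))))
  - ( RInt (fun y => sumR M (fun k =>
          sumR M (fun l => A i j k l xr y * Sc l 0%nat i j xr y) * p k i j xr y)) yb yt
    - RInt (fun y => sumR M (fun k =>
          sumR M (fun l => A il j k l xl y * Sc l 0%nat il j xl y) * p k i j xl y)) yb yt
    + RInt (fun x => sumR M (fun k =>
          sumR M (fun l => A i j k l x yt * Sc l 1%nat i j x yt) * p k i j x yt)) xl xr
    - RInt (fun x => sumR M (fun k =>
          sumR M (fun l => A i jb k l x yb * Sc l 1%nat i jb x yb) * p k i j x yb)) xl xr ).

(* Left-hand side of the second equation on cell K_ij, tested with w.
   vc = v^n, Sc = S^n. Abar v . w = sum_k sum_d sum_l (d_d a_kl) v_l w_kd. *)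
Definition ldg_eq2 (Nx Ny : nat) (xg yg : nat -> R) (M : nat) (A : coefmat)
  (vc : nat -> dgfun) (Sc : nat -> nat -> dgfun) (w : nat -> nat -> dgfun)
  (i j : nat) : R :=
  let xl := xg i in let xr := xg (S i) in
  let yb := yg j in let yt := yg (S j) in
  cell_int xg yg i j (fun x y => sumR M (fun k => sumR 2 (fun d =>
      Sc k d i j x y * w k d i j x y)))
  + cell_int xg yg i j (fun x y => sumR M (fun k =>
      sumR M (fun l => A i j k l x y * vc l i j x y) *
      sumR 2 (fun d => pd d (w k d i j) x y)))
  + cell_int xg yg i j (fun x y => sumR M (fun k => sumR 2 (fun d => sumR M (fun l =>
      pd d (A i j k l) x y * vc l i j x y * w k d i j x y))))
  - ( RInt (fun y => sumR M (fun k =>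
          sumR M (fun l => A i j k l xr y * vhat_right Nx (vc l) i j xr y)
          * w k 0%nat i j xr y)) yb yt
    - RInt (fun y => sumR M (fun k =>
          sumR M (fun l => A i j k l xl y * vhat_left (vc l) i j xl y)
          * w k 0%nat i j xl y)) yb yt
    + RInt (fun x => sumR M (fun k =>
          sumR M (fun l => A i j k l x yt * vhat_top Ny (vc l) i j x yt)
          * w k 1%nat i j x yt)) xl xr
    - RInt (fun x => sumR M (fun k =>
          sumR M (fun l => A i j k l x yb * vhat_bottom (vc l) i j x yb)
          * w k 1%nat i j x yb)) xl xr ).

Definition l2sq (Nx Ny : nat) (xg yg : nat -> R) (M : nat) (u : nat -> dgfun) : R :=
  sumR Nx (fun i => sumR Ny (fun j =>
    cell_int xg yg i j (fun x y => sumR M (fun k => (u k i j x y) ^ 2)))).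
Definition l2sq2 (Nx Ny : nat) (xg yg : nat -> R) (M : nat) (u : nat -> nat -> dgfun) : R :=
  sumR Nx (fun i => sumR Ny (fun j =>
    cell_int xg yg i j (fun x y => sumR M (fun k => sumR 2 (fun d => (u k d i j x y) ^ 2))))).

Definition energy (Nx Ny : nat) (xg yg : nat -> R) (M : nat) (dt : R)
  (v : nat -> nat -> dgfun) (Sh : nat -> nat -> nat -> dgfun) (m : nat) : R :=
  l2sq Nx Ny xg yg M (fun k i j x y => (v m k i j x y - v (m - 1)%nat k i j x y) / dt)
  + l2sq2 Nx Ny xg yg M (fun k d i j x y => (Sh m k d i j x y + Sh (m - 1)%nat k d i j x y) / 2)
  - dt ^ 2 / 4 *
    l2sq2 Nx Ny xg yg M (fun k d i j x y => (Sh m k d i j x y - Sh (m - 1)%nat k d i j x y) / dt).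

(* Main.v *)
Require Import Defs.
From Stdlib Require Import Reals Arith Lra Lia.
From Coquelicot Require Import Coquelicot.
Open Scope R_scope.

Lemma sumR_ext n f g : (forall m, (m < n)%nat -> f m = g m) -> sumR n f = sumR n g.
Proof. induction n; simpl; intros H; auto. rewrite IHn, H; auto. Qed.

Lemma sumR_plus n f g : sumR n (fun m => f m + g m) = sumR n f + sumR n g.
Proof. induction n; simpl; [lra|]. rewrite IHn; lra. Qed.

Lemma sumR_minus n f g : sumR n (fun m => f m - g m) = sumR n f - sumR n g.
Proof. induction n; simpl; [lra|]. rewrite IHn; lra. Qed.

Lemma sumR_scal_l n c f : sumR n (fun m => c * f m) = c * sumR n f.
Proof. induction n; simpl; [lra|]. rewrite IHn; lra. Qed.

Lemma sumR_scal_r n c f : sumR n (fun m => f m * c) = sumR n f * c.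
Proof. induction n; simpl; [lra|]. rewrite IHn; lra. Qed.

Lemma sumR_zero n : sumR n (fun _ => 0) = 0.
Proof. induction n; simpl; [lra|]. rewrite IHn; lra. Qed.

Lemma sumR_swap n p (f : nat -> nat -> R) :
  sumR n (fun a => sumR p (fun b => f a b)) = sumR p (fun b => sumR n (fun a => f a b)).
Proof.
  induction n; simpl. { rewrite sumR_zero; auto. }
  rewrite IHn, <- sumR_plus; auto.
Qed.

Lemma sumR_shift n f : sumR (S n) f = f 0%nat + sumR n (fun m => f (S m)).
Proof. induction n; simpl in *; [lra|]. rewrite IHn; lra. Qed.

Definition cont2 (f : fun2) := forall x y, continuity_2d_pt f x y.

Lemma cont2_1 f x y : cont2 f -> continuous (fun t => f t y) x.
Proof.
  intros H.
  apply (continuous_comp_2 (fun t => t) (fun _ => y) f).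
  - apply continuous_id.
  - apply continuous_const.
  - apply continuity_2d_pt_filterlim. apply H.
Qed.

Lemma cont2_2 f x y : cont2 f -> continuous (fun t => f x t) y.
Proof.
  intros H.
  apply (continuous_comp_2 (fun _ => x) (fun t => t) f).
  - apply continuous_const.
  - apply continuous_id.
  - apply continuity_2d_pt_filterlim. apply H.
Qed.

Lemma cont2_ext f g : (forall x y, f x y = g x y) -> cont2 f -> cont2 g.
Proof. intros E H x y. eapply continuity_2d_pt_ext; eauto. Qed.

Lemma cont2_plus f g : cont2 f -> cont2 g -> cont2 (fun x y => f x y + g x y).
Proof. intros ? ? x y. apply continuity_2d_pt_plus; auto. Qed.
Lemma cont2_minus f g : cont2 f -> cont2 g -> cont2 (fun x y => f x y - g x y).
Proof. intros ? ? x y. apply continuity_2d_pt_minus; auto. Qed.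
Lemma cont2_mult f g : cont2 f -> cont2 g -> cont2 (fun x y => f x y * g x y).
Proof. intros ? ? x y. apply continuity_2d_pt_mult; auto. Qed.
Lemma cont2_const c : cont2 (fun _ _ => c).
Proof. intros x y. apply continuity_2d_pt_const. Qed.
Lemma cont2_sumR n (f : nat -> fun2) :
  (forall m, (m < n)%nat -> cont2 (f m)) -> cont2 (fun x y => sumR n (fun m => f m x y)).
Proof.
  induction n; simpl; intros H.
  - apply cont2_const.
  - apply cont2_plus; auto.
Qed.

Lemma cont2_ex_RInt_y f x c d : cont2 f -> ex_RInt (fun y => f x y) c d.
Proof. intros H. apply (@ex_RInt_continuous R_CompleteNormedModule). intros; apply cont2_2; auto. Qed.
Lemma cont2_ex_RInt_x f y a b : cont2 f -> ex_RInt (fun x => f x y) a b.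
Proof. intros H. apply (@ex_RInt_continuous R_CompleteNormedModule). intros; apply cont2_1; auto. Qed.

Lemma cont_param_aux f c d x0 : cont2 f -> c <= d -> continuous (fun x => RInt (fun y => f x y) c d) x0.
Proof.
  intros H Hcd.
  apply filterlim_locally. intros eps.
  assert (Hp : 0 < eps / (d - c + 1)) by (apply Rdiv_lt_0_compat; [apply cond_pos|lra]).
  destruct (uniform_continuity_2d f (x0 - 1) (x0 + 1) c d) with (eps := mkposreal _ Hp)
    as [delta Hd].
  { intros; apply H. }
  assert (Hm : 0 < Rmin delta 1) by (apply Rmin_pos; [apply cond_pos|lra]).
  exists (mkposreal _ Hm). intros x Hx.
  change (Rabs (RInt (fun y => f x y) c d - RInt (fun y => f x0 y) c d) < eps).
  change (Rabs (x - x0) < Rmin delta 1) in Hx.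
  assert (Hx1 : Rabs (x - x0) < delta) by (eapply Rlt_le_trans; [apply Hx| apply Rmin_l]).
  assert (Hx2 : Rabs (x - x0) < 1) by (eapply Rlt_le_trans; [apply Hx| apply Rmin_r]).
  apply Rabs_def2 in Hx2.
  rewrite <- (RInt_minus (fun y => f x y) (fun y => f x0 y)); try apply cont2_ex_RInt_y; auto.
  eapply Rle_lt_trans.
  apply abs_RInt_le_const with (M := eps / (d - c + 1)); auto.
  - apply ex_RInt_minus; apply cont2_ex_RInt_y; auto.
  - intros t Ht. left. apply (Hd x0 t x t); try lra.
    destruct delta; simpl; rewrite Rminus_eq_0, Rabs_R0; auto.
  - assert (0 < eps) by apply cond_pos.
    apply Rlt_le_trans with ((d - c + 1) * (eps / (d - c + 1))).
    + apply Rmult_lt_compat_r; auto; lra.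
    + right; field; lra.
Qed.

Lemma cont_param f c d x0 : cont2 f -> continuous (fun x => RInt (fun y => f x y) c d) x0.
Proof.
  intros H.
  destruct (Rle_dec c d) as [h|h]; [now apply cont_param_aux|].
  apply continuous_ext with (fun x => opp (RInt (fun y => f x y) d c)).
  { intros x. rewrite opp_RInt_swap; auto. apply cont2_ex_RInt_y; auto. }
  apply (continuous_opp (fun x => RInt (fun y => f x y) d c)). apply cont_param_aux; auto; lra.
Qed.

Lemma cell_ex f a b c d : cont2 f -> ex_RInt (fun x => RInt (fun y => f x y) c d) a b.
Proof. intros H. apply (@ex_RInt_continuous R_CompleteNormedModule). intros; apply cont_param; auto. Qed.

Definition c1 (f : fun2) := cont2 f /\ cont2 (dxp f) /\ cont2 (dyp f) /\
  (forall x y, ex_derive (fun t => f t y) x) /\ (forall x y, ex_derive (fun t => f x t) y).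

Lemma c1_ext f g : (forall x y, f x y = g x y) -> c1 f -> c1 g.
Proof.
  intros E (H1 & H2 & H3 & H4 & H5).
  assert (Ex : forall x y, dxp f x y = dxp g x y).
  { intros; unfold dxp; apply Derive_ext; auto. }
  assert (Ey : forall x y, dyp f x y = dyp g x y).
  { intros; unfold dyp; apply Derive_ext; auto. }
  repeat split.
  - eapply cont2_ext; eauto.
  - eapply cont2_ext; eauto.
  - eapply cont2_ext; eauto.
  - intros; eapply ex_derive_ext; [|apply H4]; simpl; auto.
  - intros; eapply ex_derive_ext; [|apply H5]; simpl; auto.
Qed.

Lemma dxp_plus f g x y : (forall x y, ex_derive (fun t => f t y) x) -> (forall x y, ex_derive (fun t => g t y) x) ->
  dxp (fun x y => f x y + g x y) x y = dxp f x y + dxp g x y.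
Proof. intros; unfold dxp. apply (Derive_plus (fun t => f t y) (fun t => g t y)); auto. Qed.
Lemma dyp_plus f g x y : (forall x y, ex_derive (fun t => f x t) y) -> (forall x y, ex_derive (fun t => g x t) y) ->
  dyp (fun x y => f x y + g x y) x y = dyp f x y + dyp g x y.
Proof. intros; unfold dyp. apply (Derive_plus (fun t => f x t) (fun t => g x t)); auto. Qed.
Lemma dxp_mult f g x y : (forall x y, ex_derive (fun t => f t y) x) -> (forall x y, ex_derive (fun t => g t y) x) ->
  dxp (fun x y => f x y * g x y) x y = dxp f x y * g x y + f x y * dxp g x y.
Proof. intros; unfold dxp. apply (Derive_mult (fun t => f t y) (fun t => g t y)); auto. Qed.
Lemma dyp_mult f g x y : (forall x y, ex_derive (fun t => f x t) y) -> (forall x y, ex_derive (fun t => g x t) y) ->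
  dyp (fun x y => f x y * g x y) x y = dyp f x y * g x y + f x y * dyp g x y.
Proof. intros; unfold dyp. apply (Derive_mult (fun t => f x t) (fun t => g x t)); auto. Qed.

Lemma c1_plus f g : c1 f -> c1 g -> c1 (fun x y => f x y + g x y).
Proof.
  intros (F1 & F2 & F3 & F4 & F5) (G1 & G2 & G3 & G4 & G5).
  repeat split.
  - apply cont2_plus; auto.
  - apply cont2_ext with (fun x y => dxp f x y + dxp g x y).
    { intros; rewrite dxp_plus; auto. } apply cont2_plus; auto.
  - apply cont2_ext with (fun x y => dyp f x y + dyp g x y).
    { intros; rewrite dyp_plus; auto. } apply cont2_plus; auto.
  - intros; apply (ex_derive_plus (fun t => f t y) (fun t => g t y)); auto.
  - intros; apply (ex_derive_plus (fun t => f x t) (fun t => g x t)); auto.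
Qed.

Lemma c1_mult f g : c1 f -> c1 g -> c1 (fun x y => f x y * g x y).
Proof.
  intros (F1 & F2 & F3 & F4 & F5) (G1 & G2 & G3 & G4 & G5).
  repeat split.
  - apply cont2_mult; auto.
  - apply cont2_ext with (fun x y => dxp f x y * g x y + f x y * dxp g x y).
    { intros; rewrite dxp_mult; auto. } apply cont2_plus; apply cont2_mult; auto.
  - apply cont2_ext with (fun x y => dyp f x y * g x y + f x y * dyp g x y).
    { intros; rewrite dyp_mult; auto. } apply cont2_plus; apply cont2_mult; auto.
  - intros; apply (ex_derive_mult (fun t => f t y) (fun t => g t y)); auto.
  - intros; apply (ex_derive_mult (fun t => f x t) (fun t => g x t)); auto.
Qed.

Lemma c1_const c : c1 (fun _ _ => c).
Proof.
  repeat split; try apply cont2_const.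
  - apply cont2_ext with (fun _ _ => 0). { intros; unfold dxp; rewrite Derive_const; auto. } apply cont2_const.
  - apply cont2_ext with (fun _ _ => 0). { intros; unfold dyp; rewrite Derive_const; auto. } apply cont2_const.
  - intros; apply ex_derive_const.
  - intros; apply ex_derive_const.
Qed.

Lemma c1_opp f : c1 f -> c1 (fun x y => - f x y).
Proof. intros H. apply c1_ext with (fun x y => (-1) * f x y). { intros; ring. }
  apply c1_mult; auto; apply c1_const. Qed.

Lemma c1_minus f g : c1 f -> c1 g -> c1 (fun x y => f x y - g x y).
Proof. intros. apply c1_plus; auto. apply c1_opp; auto. Qed.

Lemma c1_x : c1 (fun x _ => x).
Proof.
  repeat split.
  - intros x y; apply continuity_2d_pt_id1.
  - apply cont2_ext with (fun _ _ => 1). { intros; unfold dxp; rewrite Derive_id; auto. } apply cont2_const.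
  - apply cont2_ext with (fun _ _ => 0). { intros; unfold dyp; rewrite Derive_const; auto. } apply cont2_const.
  - intros; apply ex_derive_id.
  - intros; apply ex_derive_const.
Qed.
Lemma c1_y : c1 (fun _ y => y).
Proof.
  repeat split.
  - intros x y; apply continuity_2d_pt_id2.
  - apply cont2_ext with (fun _ _ => 0). { intros; unfold dxp; rewrite Derive_const; auto. } apply cont2_const.
  - apply cont2_ext with (fun _ _ => 1). { intros; unfold dyp; rewrite Derive_id; auto. } apply cont2_const.
  - intros; apply ex_derive_const.
  - intros; apply ex_derive_id.
Qed.

Lemma c1_sumR n (f : nat -> fun2) :
  (forall m, (m < n)%nat -> c1 (f m)) -> c1 (fun x y => sumR n (fun m => f m x y)).
Proof.
  induction n; simpl; intros H.
  - apply c1_const.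
  - apply c1_plus; auto.
Qed.

Lemma c1_powx a : c1 (fun x _ => x ^ a).
Proof. induction a; simpl. apply c1_const. apply c1_mult; auto; apply c1_x. Qed.
Lemma c1_powy a : c1 (fun _ y => y ^ a).
Proof. induction a; simpl. apply c1_const. apply c1_mult; auto; apply c1_y. Qed.

Lemma poly2_c1 k f : poly2 k f -> c1 f.
Proof.
  intros [c Hc]. eapply c1_ext. { intros x y; symmetry; apply Hc. }
  apply c1_sumR; intros a _. apply c1_sumR; intros b _.
  apply c1_mult; [apply c1_mult|]; [apply c1_const|apply c1_powx|apply c1_powy].
Qed.

Lemma smooth2_c1 f : smooth2 f -> c1 f.
Proof.
  intros H.
  assert (C : forall s, cont2 (dpart s f)).
  { intros s x y. apply continuity_2d_pt_filterlim. apply (H s x y). }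
  repeat split.
  - apply (C nil).
  - apply (C (cons true nil)).
  - apply (C (cons false nil)).
  - intros x y; apply (H nil x y).
  - intros x y; apply (H nil x y).
Qed.

Lemma ibp_y F a b c d : c1 F ->
  RInt (fun x => RInt (fun y => dyp F x y) c d) a b
  = RInt (fun x => F x d) a b - RInt (fun x => F x c) a b.
Proof.
  intros (F1 & F2 & F3 & F4 & F5).
  rewrite (RInt_ext _ (fun x => F x d - F x c)).
  - apply (RInt_minus (fun x => F x d) (fun x => F x c)); apply cont2_ex_RInt_x; auto.
  - intros x _. apply (RInt_Derive (fun t => F x t)).
    + intros; auto.
    + intros; apply (cont2_2 (dyp F)); auto.
Qed.

Lemma ibp_x F a b c d : c1 F ->
  RInt (fun x => RInt (fun y => dxp F x y) c d) a b
  = RInt (fun y => F b y) c d - RInt (fun y => F a y) c d.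
Proof.
  intros (F1 & F2 & F3 & F4 & F5).
  set (G := fun x => RInt (fun y => F x y) c d).
  assert (D : forall x, is_derive G x (RInt (fun y => dxp F x y) c d)).
  { intros x. unfold G. apply (is_derive_RInt_param F c d x).
    - apply filter_forall. intros; auto.
    - intros t _. apply F2.
    - apply filter_forall. intros; apply cont2_ex_RInt_y; auto. }
  rewrite (RInt_ext _ (Derive G)).
  - rewrite RInt_Derive; [unfold G; reflexivity| |].
    + intros; eexists; apply D.
    + intros. apply continuous_ext with (fun x => RInt (fun y => dxp F x y) c d).
      { intros; symmetry; apply is_derive_unique; auto. }
      apply cont_param; auto.
  - intros; symmetry; apply is_derive_unique; auto.
Qed.

Lemma cell_int_plus xg yg i j f g : cont2 f -> cont2 g ->
  cell_int xg yg i j (fun x y => f x y + g x y) = cell_int xg yg i j f + cell_int xg yg i j g.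
Proof.
  intros Hf Hg; unfold cell_int.
  rewrite (RInt_ext _ (fun x => RInt (fun y => f x y) (yg j) (yg (S j)) + RInt (fun y => g x y) (yg j) (yg (S j)))).
  - apply (RInt_plus (fun x => RInt (fun y => f x y) _ _) (fun x => RInt (fun y => g x y) _ _));
    apply cell_ex; auto.
  - intros. apply (RInt_plus (fun y => f x y) (fun y => g x y)); apply cont2_ex_RInt_y; auto.
Qed.

Lemma cell_int_minus xg yg i j f g : cont2 f -> cont2 g ->
  cell_int xg yg i j (fun x y => f x y - g x y) = cell_int xg yg i j f - cell_int xg yg i j g.
Proof.
  intros Hf Hg; unfold cell_int.
  rewrite (RInt_ext _ (fun x => RInt (fun y => f x y) (yg j) (yg (S j)) - RInt (fun y => g x y) (yg j) (yg (S j)))).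
  - apply (RInt_minus (fun x => RInt (fun y => f x y) _ _) (fun x => RInt (fun y => g x y) _ _));
    apply cell_ex; auto.
  - intros. apply (RInt_minus (fun y => f x y) (fun y => g x y)); apply cont2_ex_RInt_y; auto.
Qed.

Lemma cell_int_scal xg yg i j c f : cont2 f ->
  cell_int xg yg i j (fun x y => c * f x y) = c * cell_int xg yg i j f.
Proof.
  intros Hf; unfold cell_int.
  rewrite (RInt_ext _ (fun x => c * RInt (fun y => f x y) (yg j) (yg (S j)))).
  - apply (RInt_scal (fun x => RInt (fun y => f x y) _ _)); apply cell_ex; auto.
  - intros. apply (RInt_scal (fun y => f x y)); apply cont2_ex_RInt_y; auto.
Qed.

Lemma cell_int_ext xg yg i j f g : xg i <= xg (S i) -> yg j <= yg (S j) ->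
  (forall x y, in_cell xg yg i j x y -> f x y = g x y) ->
  cell_int xg yg i j f = cell_int xg yg i j g.
Proof.
  intros Hx Hy E; unfold cell_int.
  apply RInt_ext. intros x Hx'. apply RInt_ext. intros y Hy'.
  rewrite Rmin_left, Rmax_right in *; auto.
  apply E; split; lra.
Qed.

Lemma RInt_plus' f g a b : (forall t, continuous f t) -> (forall t, continuous g t) ->
  RInt (fun x => f x + g x) a b = RInt f a b + RInt g a b.
Proof. intros. apply (RInt_plus f g); apply (@ex_RInt_continuous R_CompleteNormedModule); auto. Qed.
Lemma RInt_minus' f g a b : (forall t, continuous f t) -> (forall t, continuous g t) ->
  RInt (fun x => f x - g x) a b = RInt f a b - RInt g a b.
Proof. intros. apply (RInt_minus f g); apply (@ex_RInt_continuous R_CompleteNormedModule); auto. Qed.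

Lemma c1_ex_x f x y : c1 f -> ex_derive (fun t => f t y) x.
Proof. intros (_&_&_&H&_); auto. Qed.
Lemma c1_ex_y f x y : c1 f -> ex_derive (fun t => f x t) y.
Proof. intros (_&_&_&_&H); auto. Qed.
Lemma c1_cont f : c1 f -> cont2 f.
Proof. intros (H&_); auto. Qed.
Lemma c1_cont_x f : c1 f -> cont2 (dxp f).
Proof. intros (_&H&_); auto. Qed.
Lemma c1_cont_y f : c1 f -> cont2 (dyp f).
Proof. intros (_&_&H&_); auto. Qed.


Lemma c1_exx f : c1 f -> forall x y, ex_derive (fun t => f t y) x.
Proof. intros (_&_&_&H&_); exact H. Qed.
Lemma c1_exy f : c1 f -> forall x y, ex_derive (fun t => f x t) y.
Proof. intros (_&_&_&_&H); exact H. Qed.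

Lemma dxp_plus1 f g x y : c1 f -> c1 g ->
  dxp (fun x y => f x y + g x y) x y = dxp f x y + dxp g x y.
Proof. intros Hf Hg. apply dxp_plus; [exact (c1_exx f Hf)|exact (c1_exx g Hg)]. Qed.
Lemma dyp_plus1 f g x y : c1 f -> c1 g ->
  dyp (fun x y => f x y + g x y) x y = dyp f x y + dyp g x y.
Proof. intros Hf Hg. apply dyp_plus; [exact (c1_exy f Hf)|exact (c1_exy g Hg)]. Qed.
Lemma dxp_mult1 f g x y : c1 f -> c1 g ->
  dxp (fun x y => f x y * g x y) x y = dxp f x y * g x y + f x y * dxp g x y.
Proof. intros Hf Hg. apply dxp_mult; [exact (c1_exx f Hf)|exact (c1_exx g Hg)]. Qed.
Lemma dyp_mult1 f g x y : c1 f -> c1 g ->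
  dyp (fun x y => f x y * g x y) x y = dyp f x y * g x y + f x y * dyp g x y.
Proof. intros Hf Hg. apply dyp_mult; [exact (c1_exy f Hf)|exact (c1_exy g Hg)]. Qed.

Lemma dxp_sumR n (f : nat -> fun2) x y : (forall m, (m < n)%nat -> c1 (f m)) ->
  dxp (fun x y => sumR n (fun m => f m x y)) x y = sumR n (fun m => dxp (f m) x y).
Proof.
  induction n; intros H.
  - unfold dxp; cbn [sumR]; apply Derive_const.
  - change (dxp (fun x y => sumR n (fun m => f m x y) + f n x y) x y =
            sumR n (fun m => dxp (f m) x y) + dxp (f n) x y).
    rewrite (dxp_plus1 (fun x y => sumR n (fun m => f m x y)) (f n)).
    + rewrite IHn; [reflexivity|]. intros m Hm; apply H; lia.
    + apply c1_sumR. intros m Hm; apply H; lia.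
    + apply H; lia.
Qed.
Lemma dyp_sumR n (f : nat -> fun2) x y : (forall m, (m < n)%nat -> c1 (f m)) ->
  dyp (fun x y => sumR n (fun m => f m x y)) x y = sumR n (fun m => dyp (f m) x y).
Proof.
  induction n; intros H.
  - unfold dyp; cbn [sumR]; apply Derive_const.
  - change (dyp (fun x y => sumR n (fun m => f m x y) + f n x y) x y =
            sumR n (fun m => dyp (f m) x y) + dyp (f n) x y).
    rewrite (dyp_plus1 (fun x y => sumR n (fun m => f m x y)) (f n)).
    + rewrite IHn; [reflexivity|]. intros m Hm; apply H; lia.
    + apply c1_sumR. intros m Hm; apply H; lia.
    + apply H; lia.
Qed.

Definition Fform M (a : nat -> nat -> fun2) (u s : nat -> fun2) : fun2 :=
  fun x y => sumR M (fun k => sumR M (fun l => a k l x y * u l x y) * s k x y).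

Lemma c1_F M a u s : (forall k l, (k < M)%nat -> (l < M)%nat -> c1 (a k l)) ->
  (forall l, (l < M)%nat -> c1 (u l)) -> (forall k, (k < M)%nat -> c1 (s k)) -> c1 (Fform M a u s).
Proof.
  intros Ha Hu Hs. unfold Fform. apply c1_sumR; intros k Hk.
  apply c1_mult; [|apply Hs; exact Hk]. apply c1_sumR; intros l Hl.
  apply c1_mult; [apply Ha; assumption|apply Hu; assumption].
Qed.

Lemma dxp_F M a u s x y : (forall k l, (k < M)%nat -> (l < M)%nat -> c1 (a k l)) ->
  (forall l, (l < M)%nat -> c1 (u l)) -> (forall k, (k < M)%nat -> c1 (s k)) ->
  dxp (Fform M a u s) x y =
  sumR M (fun k => sumR M (fun l => dxp (a k l) x y * u l x y + a k l x y * dxp (u l) x y) * s k x y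
                   + sumR M (fun l => a k l x y * u l x y) * dxp (s k) x y).
Proof.
  intros Ha Hu Hs. unfold Fform.
  rewrite (dxp_sumR M (fun k x y => sumR M (fun l => a k l x y * u l x y) * s k x y)).
  2:{ intros k Hk. apply c1_mult; [|apply Hs; exact Hk]. apply c1_sumR; intros l Hl.
      apply c1_mult; [apply Ha; assumption|apply Hu; assumption]. }
  apply sumR_ext; intros k Hk.
  rewrite (dxp_mult1 (fun x y => sumR M (fun l => a k l x y * u l x y)) (s k)).
  2:{ apply c1_sumR; intros l Hl. apply c1_mult; [apply Ha; assumption|apply Hu; assumption]. }
  2:{ apply Hs; exact Hk. }
  rewrite (dxp_sumR M (fun l x y => a k l x y * u l x y)).
  2:{ intros l Hl. apply c1_mult; [apply Ha; assumption|apply Hu; assumption]. }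
  f_equal. f_equal. apply sumR_ext; intros l Hl.
  apply (dxp_mult1 (a k l) (u l)); [apply Ha; assumption|apply Hu; assumption].
Qed.

Lemma dyp_F M a u s x y : (forall k l, (k < M)%nat -> (l < M)%nat -> c1 (a k l)) ->
  (forall l, (l < M)%nat -> c1 (u l)) -> (forall k, (k < M)%nat -> c1 (s k)) ->
  dyp (Fform M a u s) x y =
  sumR M (fun k => sumR M (fun l => dyp (a k l) x y * u l x y + a k l x y * dyp (u l) x y) * s k x y
                   + sumR M (fun l => a k l x y * u l x y) * dyp (s k) x y).
Proof.
  intros Ha Hu Hs. unfold Fform.
  rewrite (dyp_sumR M (fun k x y => sumR M (fun l => a k l x y * u l x y) * s k x y)).
  2:{ intros k Hk. apply c1_mult; [|apply Hs; exact Hk]. apply c1_sumR; intros l Hl.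
      apply c1_mult; [apply Ha; assumption|apply Hu; assumption]. }
  apply sumR_ext; intros k Hk.
  rewrite (dyp_mult1 (fun x y => sumR M (fun l => a k l x y * u l x y)) (s k)).
  2:{ apply c1_sumR; intros l Hl. apply c1_mult; [apply Ha; assumption|apply Hu; assumption]. }
  2:{ apply Hs; exact Hk. }
  rewrite (dyp_sumR M (fun l x y => a k l x y * u l x y)).
  2:{ intros l Hl. apply c1_mult; [apply Ha; assumption|apply Hu; assumption]. }
  f_equal. f_equal. apply sumR_ext; intros l Hl.
  apply (dyp_mult1 (a k l) (u l)); [apply Ha; assumption|apply Hu; assumption].
Qed.

Lemma sym_swap M (a : nat -> nat -> R) (u w : nat -> R) :
  (forall k l, (k < M)%nat -> (l < M)%nat -> a k l = a l k) ->
  sumR M (fun k => sumR M (fun l => a k l * u l) * w k) =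
  sumR M (fun k => sumR M (fun l => a k l * w l) * u k).
Proof.
  intros Hs.
  rewrite (sumR_ext M _ (fun k => sumR M (fun l => a k l * u l * w k))).
  2:{ intros; rewrite <- sumR_scal_r; auto. }
  rewrite sumR_swap. apply sumR_ext; intros l Hl.
  rewrite <- sumR_scal_r. apply sumR_ext; intros k Hk.
  rewrite Hs; auto; ring.
Qed.

Lemma alg M (a : nat -> nat -> R) (dA : nat -> nat -> nat -> R) (s dS : nat -> nat -> R)
  (vp vm : nat -> R) (dD : nat -> nat -> R) (Dv : nat -> R) :
 (forall k l, (k < M)%nat -> (l < M)%nat -> a k l = a l k) ->
 (forall l, (l < M)%nat -> Dv l = vp l - vm l) ->
 sumR M (fun k => sumR 2 (fun d => sumR M (fun l => a k l * s l d * dD d k)))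
 + (sumR M (fun k => sumR M (fun l => a k l * vp l) * sumR 2 (fun d => dS k d))
    + sumR M (fun k => sumR 2 (fun d => sumR M (fun l => dA d k l * vp l * s k d))))
 - (sumR M (fun k => sumR M (fun l => a k l * vm l) * sumR 2 (fun d => dS k d))
    + sumR M (fun k => sumR 2 (fun d => sumR M (fun l => dA d k l * vm l * s k d))))
 = sumR M (fun k => sumR M (fun l => dA 0%nat k l * Dv l + a k l * dD 0%nat l) * s k 0%nat
                    + sumR M (fun l => a k l * Dv l) * dS k 0%nat)
 + sumR M (fun k => sumR M (fun l => dA 1%nat k l * Dv l + a k l * dD 1%nat l) * s k 1%nat
                    + sumR M (fun l => a k l * Dv l) * dS k 1%nat).
Proof.
  intros Hs HDv.
  assert (HX : sumR M (fun k => sumR 2 (fun d => sumR M (fun l => a k l * s l d * dD d k)))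
     = sumR M (fun k => sumR M (fun l => a k l * s k 0%nat * dD 0%nat l + a k l * s k 1%nat * dD 1%nat l))).
  { rewrite (sumR_ext M _ (fun k => sumR M (fun l => a k l * s l 0%nat * dD 0%nat k + a k l * s l 1%nat * dD 1%nat k))).
    2:{ intros k Hk. simpl. rewrite Rplus_0_l, <- sumR_plus. reflexivity. }
    rewrite sumR_swap. apply sumR_ext; intros l Hl. apply sumR_ext; intros k Hk.
    rewrite (Hs l k); auto. }
  rewrite HX. clear HX.
  rewrite <- ?sumR_plus, <- ?sumR_minus, <- ?sumR_plus.
  apply sumR_ext; intros k Hk. simpl.
  rewrite ?Rplus_0_l, <- ?sumR_scal_r, <- ?sumR_plus, <- ?sumR_minus, <- ?sumR_plus.
  apply sumR_ext; intros l Hl. rewrite HDv; auto. ring.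
Qed.

Lemma poly2_minus k f g : poly2 k f -> poly2 k g -> poly2 k (fun x y => f x y - g x y).
Proof.
  intros [c Hc] [d Hd]. exists (fun a b => c a b - d a b). intros x y.
  rewrite Hc, Hd, <- sumR_minus. apply sumR_ext; intros a _.
  rewrite <- sumR_minus. apply sumR_ext; intros b _. ring.
Qed.

Lemma cont2_divc f c : cont2 f -> cont2 (fun x y => f x y / c).
Proof. intros H. unfold Rdiv. apply (cont2_mult f (fun _ _ => / c)); auto. apply cont2_const. Qed.
Lemma cont2_powc f n : cont2 f -> cont2 (fun x y => f x y ^ n).
Proof. intros H. induction n; simpl. apply cont2_const. apply (cont2_mult f (fun x y => f x y ^ n)); auto. Qed.
Lemma cont2_pd d f : c1 f -> cont2 (pd d f).
Proof. intros H. destruct d; simpl. apply c1_cont_x; auto. apply c1_cont_y; auto. Qed.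

Lemma cont1_plus (f g : R -> R) (t : R) : continuous f t -> continuous g t -> continuous (fun x => f x + g x) t.
Proof. intros. apply (continuous_plus f g); auto. Qed.
Lemma cont1_minus (f g : R -> R) (t : R) : continuous f t -> continuous g t -> continuous (fun x => f x - g x) t.
Proof. intros. apply (continuous_minus f g); auto. Qed.
Lemma cont1_mult (f g : R -> R) (t : R) : continuous f t -> continuous g t -> continuous (fun x => f x * g x) t.
Proof. intros. apply (continuous_mult f g); auto. Qed.
Lemma cont1_const (c t : R) : continuous (fun _ : R => c) t.
Proof. apply continuous_const. Qed.
Lemma cont1_sumR n (f : nat -> R -> R) t : (forall m, (m < n)%nat -> continuous (f m) t) ->
  continuous (fun x => sumR n (fun m => f m x)) t.
Proof.
  induction n; simpl; intros H. apply cont1_const.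
  apply (cont1_plus (fun x => sumR n (fun m => f m x)) (f n)); auto.
Qed.

Ltac ctac tc :=
  repeat (cbv beta; match goal with
  | |- forall _, _ => intro
  | |- cont2 (fun _ _ => ?c) => apply (cont2_const c)
  | |- cont2 (fun x y => sumR ?n (@?F x y)) => apply (cont2_sumR n (fun m x y => F x y m)); intros ? ?
  | |- cont2 (fun x y => @?f x y + @?g x y) => apply (cont2_plus f g)
  | |- cont2 (fun x y => @?f x y - @?g x y) => apply (cont2_minus f g)
  | |- cont2 (fun x y => @?f x y * @?g x y) => apply (cont2_mult f g)
  | |- cont2 (fun x y => @?f x y / ?c) => apply (cont2_divc f c)
  | |- cont2 (fun x y => @?f x y ^ ?c) => apply (cont2_powc f c)
  | |- cont2 (fun x y => pd ?d ?f x y) => apply (cont2_pd d f); tc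
  | |- cont2 (fun x y => ?f x y) => apply (c1_cont f); tc
  | |- continuous (fun _ => ?c) _ => apply (cont1_const c)
  | |- continuous (fun x => sumR ?n (@?F x)) _ => apply (cont1_sumR n (fun m x => F x m)); intros ? ?
  | |- continuous (fun x => @?f x + @?g x) _ => apply (cont1_plus f g)
  | |- continuous (fun x => @?f x - @?g x) _ => apply (cont1_minus f g)
  | |- continuous (fun x => @?f x * @?g x) _ => apply (cont1_mult f g)
  | |- continuous (fun y => ?f ?a y) _ => apply (cont2_2 f); apply (c1_cont f); tc
  | |- continuous (fun x => ?f x ?b) _ => apply (cont2_1 f); apply (c1_cont f); tc
  end).

Definition Qc (xg yg : nat -> R) M dt (va vb : nat -> dgfun) (Sa Sb : nat -> nat -> dgfun) i j :=
  cell_int xg yg i j (fun x y => sumR M (fun kk => ((va kk i j x y - vb kk i j x y) / dt) ^ 2)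
    + sumR M (fun kk => sumR 2 (fun d => Sa kk d i j x y * Sb kk d i j x y))).

Lemma L_time M xg yg dt (vp vc vm : nat -> dgfun) (Sp Sc Sm : nat -> nat -> dgfun) (D : nat -> dgfun) i j :
  xg i < xg (S i) -> yg j < yg (S j) -> dt <> 0 ->
  (forall kk, (kk < M)%nat -> c1 (vp kk i j)) ->
  (forall kk, (kk < M)%nat -> c1 (vc kk i j)) ->
  (forall kk, (kk < M)%nat -> c1 (vm kk i j)) ->
  (forall kk d, (kk < M)%nat -> (d < 2)%nat -> c1 (Sp kk d i j)) ->
  (forall kk d, (kk < M)%nat -> (d < 2)%nat -> c1 (Sc kk d i j)) ->
  (forall kk d, (kk < M)%nat -> (d < 2)%nat -> c1 (Sm kk d i j)) ->
  (forall kk, (kk < M)%nat -> c1 (D kk i j)) ->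
  (forall kk x y, D kk i j x y = vp kk i j x y - vm kk i j x y) ->
  cell_int xg yg i j (fun x y => sumR M (fun k => (vp k i j x y - 2 * vc k i j x y + vm k i j x y) / dt ^ 2 * D k i j x y))
  + cell_int xg yg i j (fun x y => sumR M (fun k => sumR 2 (fun d => Sp k d i j x y * Sc k d i j x y)))
  - cell_int xg yg i j (fun x y => sumR M (fun k => sumR 2 (fun d => Sm k d i j x y * Sc k d i j x y)))
  = Qc xg yg M dt vp vc Sp Sc i j - Qc xg yg M dt vc vm Sc Sm i j.
Proof.
  intros Hx Hy Hdt hvp hvc hvm hSp hSc hSm hD HDe.
  unfold Qc.
  rewrite <- cell_int_plus, <- !cell_int_minus;
    ctac ltac:(first [apply hvp|apply hvc|apply hvm|apply hSp|apply hSc|apply hSm|apply hD]; lia).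
  apply cell_int_ext; try lra. intros x y _. cbv beta.
  rewrite <- ?sumR_plus, <- ?sumR_minus, <- ?sumR_plus, <- ?sumR_minus.
  apply sumR_ext; intros kk Hk. simpl. rewrite HDe. field. auto.
Qed.

Lemma L_bulk M xg yg (A : coefmat) (vp vm : nat -> dgfun) (Sc : nat -> nat -> dgfun) (D : nat -> dgfun) i j :
  xg i < xg (S i) -> yg j < yg (S j) ->
  (forall kk l, (kk < M)%nat -> (l < M)%nat -> c1 (A i j kk l)) ->
  (forall x y, in_cell xg yg i j x y -> forall kk l, (kk < M)%nat -> (l < M)%nat -> A i j kk l x y = A i j l kk x y) ->
  (forall kk, (kk < M)%nat -> c1 (vp kk i j)) ->
  (forall kk, (kk < M)%nat -> c1 (vm kk i j)) ->
  (forall kk d, (kk < M)%nat -> (d < 2)%nat -> c1 (Sc kk d i j)) ->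
  (forall kk, (kk < M)%nat -> c1 (D kk i j)) ->
  (forall kk x y, D kk i j x y = vp kk i j x y - vm kk i j x y) ->
  cell_int xg yg i j (fun x y => sumR M (fun k => sumR 2 (fun d => sumR M (fun l =>
      A i j k l x y * Sc l d i j x y * pd d (D k i j) x y))))
  + (cell_int xg yg i j (fun x y => sumR M (fun k =>
         sumR M (fun l => A i j k l x y * vp l i j x y) * sumR 2 (fun d => pd d (Sc k d i j) x y)))
     + cell_int xg yg i j (fun x y => sumR M (fun k => sumR 2 (fun d => sumR M (fun l =>
         pd d (A i j k l) x y * vp l i j x y * Sc k d i j x y)))))
  - (cell_int xg yg i j (fun x y => sumR M (fun k =>
         sumR M (fun l => A i j k l x y * vm l i j x y) * sumR 2 (fun d => pd d (Sc k d i j) x y)))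
     + cell_int xg yg i j (fun x y => sumR M (fun k => sumR 2 (fun d => sumR M (fun l =>
         pd d (A i j k l) x y * vm l i j x y * Sc k d i j x y)))))
  = (RInt (fun y => Fform M (A i j) (fun l => D l i j) (fun kk => Sc kk 0%nat i j) (xg (S i)) y) (yg j) (yg (S j))
     - RInt (fun y => Fform M (A i j) (fun l => D l i j) (fun kk => Sc kk 0%nat i j) (xg i) y) (yg j) (yg (S j)))
  + (RInt (fun x => Fform M (A i j) (fun l => D l i j) (fun kk => Sc kk 1%nat i j) x (yg (S j))) (xg i) (xg (S i))
     - RInt (fun x => Fform M (A i j) (fun l => D l i j) (fun kk => Sc kk 1%nat i j) x (yg j)) (xg i) (xg (S i))).
Proof.
  intros Hx Hy hA hsym hvp hvm hSc hD HDe.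
  set (F0 := Fform M (A i j) (fun l => D l i j) (fun kk => Sc kk 0%nat i j)).
  set (F1 := Fform M (A i j) (fun l => D l i j) (fun kk => Sc kk 1%nat i j)).
  assert (C0 : c1 F0).
  { apply c1_F; intros; [apply hA|apply hD|apply hSc]; lia. }
  assert (C1 : c1 F1).
  { apply c1_F; intros; [apply hA|apply hD|apply hSc]; lia. }
  rewrite <- (ibp_x F0 (xg i) (xg (S i)) (yg j) (yg (S j)) C0).
  rewrite <- (ibp_y F1 (xg i) (xg (S i)) (yg j) (yg (S j)) C1).
  change (RInt (fun x => RInt (fun y => dxp F0 x y) (yg j) (yg (S j))) (xg i) (xg (S i)))
    with (cell_int xg yg i j (dxp F0)).
  change (RInt (fun x => RInt (fun y => dyp F1 x y) (yg j) (yg (S j))) (xg i) (xg (S i)))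
    with (cell_int xg yg i j (dyp F1)).
  rewrite <- (cell_int_plus xg yg i j (dxp F0) (dyp F1)); [| apply c1_cont_x; auto | apply c1_cont_y; auto].
  rewrite <- !cell_int_plus, <- !cell_int_minus;
    ctac ltac:(first [apply hA|apply hvp|apply hvm|apply hSc|apply hD]; lia).
  apply cell_int_ext; try lra. intros x y Hc. cbv beta.
  unfold F0, F1.
  rewrite (dxp_F M (A i j) (fun l => D l i j) (fun kk => Sc kk 0%nat i j) x y);
    [| intros; apply hA; lia | intros; apply hD; lia | intros; apply hSc; lia].
  rewrite (dyp_F M (A i j) (fun l => D l i j) (fun kk => Sc kk 1%nat i j) x y);
    [| intros; apply hA; lia | intros; apply hD; lia | intros; apply hSc; lia].
  apply (alg M (fun k l => A i j k l x y) (fun d k l => pd d (A i j k l) x y) (fun l d => Sc l d i j x y)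
    (fun k d => pd d (Sc k d i j) x y) (fun l => vp l i j x y) (fun l => vm l i j x y)
    (fun d k => pd d (D k i j) x y) (fun l => D l i j x y)).
  - intros; apply hsym; auto.
  - intros; apply HDe.
Qed.

Lemma RInt_zero a b : RInt (fun _ => 0) a b = 0.
Proof. rewrite RInt_const. unfold scal; simpl; unfold mult; simpl. ring. Qed.

Lemma sum_zero2 M (a : nat -> nat -> R) (s : nat -> R) :
  sumR M (fun k => sumR M (fun l => a k l * 0) * s k) = 0.
Proof.
  rewrite (sumR_ext M _ (fun _ => 0)). apply sumR_zero.
  intros k _. rewrite (sumR_ext M _ (fun _ => 0)). rewrite sumR_zero; ring.
  intros; ring.
Qed.

Lemma sum_diff2 M (a : nat -> nat -> R) (u w Dv s : nat -> R) :
  (forall l, (l < M)%nat -> Dv l = u l - w l) ->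
  sumR M (fun k => sumR M (fun l => a k l * u l) * s k) - sumR M (fun k => sumR M (fun l => a k l * w l) * s k)
  = sumR M (fun k => sumR M (fun l => a k l * Dv l) * s k).
Proof.
  intros H. rewrite <- sumR_minus. apply sumR_ext; intros k _.
  rewrite <- Rmult_minus_distr_r, <- sumR_minus. f_equal. apply sumR_ext; intros l Hl.
  rewrite H; auto; ring.
Qed.

Definition GX (xg yg : nat -> R) M (A : coefmat) (Sc : nat -> nat -> dgfun) (D : nat -> dgfun) i j :=
  RInt (fun y => sumR M (fun kk => sumR M (fun l => A i j kk l (xg (S i)) y * Sc l 0%nat i j (xg (S i)) y)
     * D kk (S i) j (xg (S i)) y)) (yg j) (yg (S j)).
Definition GY (xg yg : nat -> R) M (A : coefmat) (Sc : nat -> nat -> dgfun) (D : nat -> dgfun) i j :=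
  RInt (fun x => sumR M (fun kk => sumR M (fun l => A i j kk l x (yg (S j)) * Sc l 1%nat i j x (yg (S j)))
     * D kk i (S j) x (yg (S j)))) (xg i) (xg (S i)).

Lemma RInt_sum_zero2 M (a : nat -> nat -> R -> R) (s : nat -> R -> R) c d :
  RInt (fun y => sumR M (fun k => sumR M (fun l => a k l y * 0) * s k y)) c d = 0.
Proof.
  rewrite (RInt_ext _ (fun _ => 0)). apply RInt_zero.
  intros. apply (sum_zero2 M (fun k l => a k l x) (fun k => s k x)).
Qed.

Lemma L_left Nx Ny M xg yg (A : coefmat) (vp vm : nat -> dgfun) (Sc : nat -> nat -> dgfun) (D : nat -> dgfun) i j :
  (i < Nx)%nat -> (j < Ny)%nat ->
  (forall i, (i < Nx)%nat -> xg i < xg (S i)) ->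
  (forall j, (j < Ny)%nat -> yg j < yg (S j)) ->
  (forall i j kk l, (i < Nx)%nat -> (j < Ny)%nat -> (kk < M)%nat -> (l < M)%nat -> c1 (A i j kk l)) ->
  (forall i j, (i < Nx)%nat -> (j < Ny)%nat -> forall x y, in_cell xg yg i j x y ->
     forall kk l, (kk < M)%nat -> (l < M)%nat -> A i j kk l x y = A i j l kk x y) ->
  (forall kk i j, (kk < M)%nat -> (i < Nx)%nat -> (j < Ny)%nat -> c1 (vp kk i j)) ->
  (forall kk i j, (kk < M)%nat -> (i < Nx)%nat -> (j < Ny)%nat -> c1 (vm kk i j)) ->
  (forall kk d i j, (kk < M)%nat -> (d < 2)%nat -> (i < Nx)%nat -> (j < Ny)%nat -> c1 (Sc kk d i j)) ->
  (forall kk i j, (kk < M)%nat -> (i < Nx)%nat -> (j < Ny)%nat -> c1 (D kk i j)) ->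
  (forall kk i j x y, D kk i j x y = vp kk i j x y - vm kk i j x y) ->
  - RInt (fun y => Fform M (A i j) (fun l => D l i j) (fun kk => Sc kk 0%nat i j) (xg i) y) (yg j) (yg (S j))
  + RInt (fun y => sumR M (fun k => sumR M (fun l => A (Nat.pred i) j k l (xg i) y * Sc l 0%nat (Nat.pred i) j (xg i) y) * D k i j (xg i) y)) (yg j) (yg (S j))
  + RInt (fun y => sumR M (fun k => sumR M (fun l => A i j k l (xg i) y * vhat_left (vp l) i j (xg i) y) * Sc k 0%nat i j (xg i) y)) (yg j) (yg (S j))
  - RInt (fun y => sumR M (fun k => sumR M (fun l => A i j k l (xg i) y * vhat_left (vm l) i j (xg i) y) * Sc k 0%nat i j (xg i) y)) (yg j) (yg (S j))
  = if Nat.eqb i 0 then 0 else GX xg yg M A Sc D (Nat.pred i) j.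
Proof.
  intros Hi Hj Hxg Hyg hA hsym hvp hvm hSc hD HDe.
  assert (Hx := Hxg i Hi). assert (Hy := Hyg j Hj).
  destruct i as [|i'].
  - unfold vhat_left. cbn [Nat.eqb Nat.pred].
    rewrite !RInt_sum_zero2.
    match goal with |- - ?F + ?L + 0 - 0 = 0 => assert (E : F = L) end.
    { apply RInt_ext. intros y Hy'. rewrite Rmin_left, Rmax_right in Hy' by lra.
      unfold Fform.
      apply (sym_swap M (fun k l => A 0%nat j k l (xg 0%nat) y) (fun l => D l 0%nat j (xg 0%nat) y)
        (fun k => Sc k 0%nat 0%nat j (xg 0%nat) y)).
      intros; apply hsym; auto. split; lra. }
    lra.
  - unfold vhat_left. cbn [Nat.eqb Nat.pred].
    match goal with |- - ?F + ?L + ?Lp - ?Lm = _ => assert (E : Lp - Lm = F) end.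
    { rewrite <- RInt_minus';
        [| ctac ltac:(first [apply hA|apply hvp|apply hvm|apply hSc|apply hD]; lia)
         | ctac ltac:(first [apply hA|apply hvp|apply hvm|apply hSc|apply hD]; lia)].
      apply RInt_ext. intros y _. unfold Fform.
      apply (sum_diff2 M (fun k l => A (S i') j k l (xg (S i')) y) (fun l => vp l (S i') j (xg (S i')) y)
         (fun l => vm l (S i') j (xg (S i')) y) (fun l => D l (S i') j (xg (S i')) y)
         (fun k => Sc k 0%nat (S i') j (xg (S i')) y)).
      intros; apply HDe. }
    unfold GX. lra.
Qed.

Lemma L_right Nx Ny M xg yg (A : coefmat) (vp vm : nat -> dgfun) (Sc : nat -> nat -> dgfun) (D : nat -> dgfun) i j :
  (i < Nx)%nat -> (j < Ny)%nat ->
  (forall i, (i < Nx)%nat -> xg i < xg (S i)) ->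
  (forall j, (j < Ny)%nat -> yg j < yg (S j)) ->
  (forall i j kk l, (i < Nx)%nat -> (j < Ny)%nat -> (kk < M)%nat -> (l < M)%nat -> c1 (A i j kk l)) ->
  (forall i j, (i < Nx)%nat -> (j < Ny)%nat -> forall x y, in_cell xg yg i j x y ->
     forall kk l, (kk < M)%nat -> (l < M)%nat -> A i j kk l x y = A i j l kk x y) ->
  (forall kk i j, (kk < M)%nat -> (i < Nx)%nat -> (j < Ny)%nat -> c1 (vp kk i j)) ->
  (forall kk i j, (kk < M)%nat -> (i < Nx)%nat -> (j < Ny)%nat -> c1 (vm kk i j)) ->
  (forall kk d i j, (kk < M)%nat -> (d < 2)%nat -> (i < Nx)%nat -> (j < Ny)%nat -> c1 (Sc kk d i j)) ->
  (forall kk i j, (kk < M)%nat -> (i < Nx)%nat -> (j < Ny)%nat -> c1 (D kk i j)) ->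
  (forall kk i j x y, D kk i j x y = vp kk i j x y - vm kk i j x y) ->
  RInt (fun y => Fform M (A i j) (fun l => D l i j) (fun kk => Sc kk 0%nat i j) (xg (S i)) y) (yg j) (yg (S j))
  - RInt (fun y => sumR M (fun k => sumR M (fun l => A i j k l (xg (S i)) y * Sc l 0%nat i j (xg (S i)) y) * D k i j (xg (S i)) y)) (yg j) (yg (S j))
  - RInt (fun y => sumR M (fun k => sumR M (fun l => A i j k l (xg (S i)) y * vhat_right Nx (vp l) i j (xg (S i)) y) * Sc k 0%nat i j (xg (S i)) y)) (yg j) (yg (S j))
  + RInt (fun y => sumR M (fun k => sumR M (fun l => A i j k l (xg (S i)) y * vhat_right Nx (vm l) i j (xg (S i)) y) * Sc k 0%nat i j (xg (S i)) y)) (yg j) (yg (S j))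
  = - (if Nat.eqb (S i) Nx then 0 else GX xg yg M A Sc D i j).
Proof.
  intros Hi Hj Hxg Hyg hA hsym hvp hvm hSc hD HDe.
  assert (Hx := Hxg i Hi). assert (Hy := Hyg j Hj).
  assert (E0 : RInt (fun y => Fform M (A i j) (fun l => D l i j) (fun kk => Sc kk 0%nat i j) (xg (S i)) y) (yg j) (yg (S j))
    = RInt (fun y => sumR M (fun k => sumR M (fun l => A i j k l (xg (S i)) y * Sc l 0%nat i j (xg (S i)) y) * D k i j (xg (S i)) y)) (yg j) (yg (S j))).
  { apply RInt_ext. intros y Hy'. rewrite Rmin_left, Rmax_right in Hy' by lra.
    unfold Fform.
    apply (sym_swap M (fun k l => A i j k l (xg (S i)) y) (fun l => D l i j (xg (S i)) y)
      (fun k => Sc k 0%nat i j (xg (S i)) y)).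
    intros; apply hsym; auto. split; lra. }
  rewrite E0. unfold vhat_right. cbv beta.
  destruct (Nat.eqb (S i) Nx) eqn:E.
  - rewrite !RInt_sum_zero2. lra.
  - assert (Hi' : (S i < Nx)%nat) by (apply Nat.eqb_neq in E; lia).
    match goal with |- _ - _ - ?Lp + ?Lm = _ => assert (E1 : Lp - Lm = GX xg yg M A Sc D i j) end.
    { rewrite <- RInt_minus'; [| ctac ltac:(first [apply hA|apply hvp|apply hvm|apply hSc|apply hD]; lia) | ctac ltac:(first [apply hA|apply hvp|apply hvm|apply hSc|apply hD]; lia)].
      apply RInt_ext. intros y Hy'. rewrite Rmin_left, Rmax_right in Hy' by lra.
      rewrite (sum_diff2 M (fun k l => A i j k l (xg (S i)) y) (fun l => vp l (S i) j (xg (S i)) y)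
         (fun l => vm l (S i) j (xg (S i)) y) (fun l => D l (S i) j (xg (S i)) y)
         (fun k => Sc k 0%nat i j (xg (S i)) y)).
      2:{ intros; apply HDe. }
      apply (sym_swap M (fun k l => A i j k l (xg (S i)) y) (fun l => D l (S i) j (xg (S i)) y)
        (fun k => Sc k 0%nat i j (xg (S i)) y)).
      intros; apply hsym; auto. split; lra. }
    lra.
Qed.

Lemma L_bottom Nx Ny M xg yg (A : coefmat) (vp vm : nat -> dgfun) (Sc : nat -> nat -> dgfun) (D : nat -> dgfun) i j :
  (i < Nx)%nat -> (j < Ny)%nat ->
  (forall i, (i < Nx)%nat -> xg i < xg (S i)) ->
  (forall j, (j < Ny)%nat -> yg j < yg (S j)) ->
  (forall i j kk l, (i < Nx)%nat -> (j < Ny)%nat -> (kk < M)%nat -> (l < M)%nat -> c1 (A i j kk l)) ->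
  (forall i j, (i < Nx)%nat -> (j < Ny)%nat -> forall x y, in_cell xg yg i j x y ->
     forall kk l, (kk < M)%nat -> (l < M)%nat -> A i j kk l x y = A i j l kk x y) ->
  (forall kk i j, (kk < M)%nat -> (i < Nx)%nat -> (j < Ny)%nat -> c1 (vp kk i j)) ->
  (forall kk i j, (kk < M)%nat -> (i < Nx)%nat -> (j < Ny)%nat -> c1 (vm kk i j)) ->
  (forall kk d i j, (kk < M)%nat -> (d < 2)%nat -> (i < Nx)%nat -> (j < Ny)%nat -> c1 (Sc kk d i j)) ->
  (forall kk i j, (kk < M)%nat -> (i < Nx)%nat -> (j < Ny)%nat -> c1 (D kk i j)) ->
  (forall kk i j x y, D kk i j x y = vp kk i j x y - vm kk i j x y) ->
  - RInt (fun x => Fform M (A i j) (fun l => D l i j) (fun kk => Sc kk 1%nat i j) x (yg j)) (xg i) (xg (S i))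
  + RInt (fun x => sumR M (fun k => sumR M (fun l => A i (Nat.pred j) k l x (yg j) * Sc l 1%nat i (Nat.pred j) x (yg j)) * D k i j x (yg j))) (xg i) (xg (S i))
  + RInt (fun x => sumR M (fun k => sumR M (fun l => A i j k l x (yg j) * vhat_bottom (vp l) i j x (yg j)) * Sc k 1%nat i j x (yg j))) (xg i) (xg (S i))
  - RInt (fun x => sumR M (fun k => sumR M (fun l => A i j k l x (yg j) * vhat_bottom (vm l) i j x (yg j)) * Sc k 1%nat i j x (yg j))) (xg i) (xg (S i))
  = if Nat.eqb j 0 then 0 else GY xg yg M A Sc D i (Nat.pred j).
Proof.
  intros Hi Hj Hxg Hyg hA hsym hvp hvm hSc hD HDe.
  assert (Hx := Hxg i Hi). assert (Hy := Hyg j Hj).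
  destruct j as [|j'].
  - unfold vhat_bottom. cbn [Nat.eqb Nat.pred].
    rewrite !RInt_sum_zero2.
    match goal with |- - ?F + ?L + 0 - 0 = 0 => assert (E : F = L) end.
    { apply RInt_ext. intros x Hx'. rewrite Rmin_left, Rmax_right in Hx' by lra.
      unfold Fform.
      apply (sym_swap M (fun k l => A i 0%nat k l x (yg 0%nat)) (fun l => D l i 0%nat x (yg 0%nat))
        (fun k => Sc k 1%nat i 0%nat x (yg 0%nat))).
      intros; apply hsym; auto. split; lra. }
    lra.
  - unfold vhat_bottom. cbn [Nat.eqb Nat.pred].
    match goal with |- - ?F + ?L + ?Lp - ?Lm = _ => assert (E : Lp - Lm = F) end.
    { rewrite <- RInt_minus'; [| ctac ltac:(first [apply hA|apply hvp|apply hvm|apply hSc|apply hD]; lia) | ctac ltac:(first [apply hA|apply hvp|apply hvm|apply hSc|apply hD]; lia)].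
      apply RInt_ext. intros x _. unfold Fform.
      apply (sum_diff2 M (fun k l => A i (S j') k l x (yg (S j'))) (fun l => vp l i (S j') x (yg (S j')))
         (fun l => vm l i (S j') x (yg (S j'))) (fun l => D l i (S j') x (yg (S j')))
         (fun k => Sc k 1%nat i (S j') x (yg (S j')))).
      intros; apply HDe. }
    unfold GY. lra.
Qed.

Lemma L_top Nx Ny M xg yg (A : coefmat) (vp vm : nat -> dgfun) (Sc : nat -> nat -> dgfun) (D : nat -> dgfun) i j :
  (i < Nx)%nat -> (j < Ny)%nat ->
  (forall i, (i < Nx)%nat -> xg i < xg (S i)) ->
  (forall j, (j < Ny)%nat -> yg j < yg (S j)) ->
  (forall i j kk l, (i < Nx)%nat -> (j < Ny)%nat -> (kk < M)%nat -> (l < M)%nat -> c1 (A i j kk l)) ->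
  (forall i j, (i < Nx)%nat -> (j < Ny)%nat -> forall x y, in_cell xg yg i j x y ->
     forall kk l, (kk < M)%nat -> (l < M)%nat -> A i j kk l x y = A i j l kk x y) ->
  (forall kk i j, (kk < M)%nat -> (i < Nx)%nat -> (j < Ny)%nat -> c1 (vp kk i j)) ->
  (forall kk i j, (kk < M)%nat -> (i < Nx)%nat -> (j < Ny)%nat -> c1 (vm kk i j)) ->
  (forall kk d i j, (kk < M)%nat -> (d < 2)%nat -> (i < Nx)%nat -> (j < Ny)%nat -> c1 (Sc kk d i j)) ->
  (forall kk i j, (kk < M)%nat -> (i < Nx)%nat -> (j < Ny)%nat -> c1 (D kk i j)) ->
  (forall kk i j x y, D kk i j x y = vp kk i j x y - vm kk i j x y) ->
  RInt (fun x => Fform M (A i j) (fun l => D l i j) (fun kk => Sc kk 1%nat i j) x (yg (S j))) (xg i) (xg (S i))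
  - RInt (fun x => sumR M (fun k => sumR M (fun l => A i j k l x (yg (S j)) * Sc l 1%nat i j x (yg (S j))) * D k i j x (yg (S j)))) (xg i) (xg (S i))
  - RInt (fun x => sumR M (fun k => sumR M (fun l => A i j k l x (yg (S j)) * vhat_top Ny (vp l) i j x (yg (S j))) * Sc k 1%nat i j x (yg (S j)))) (xg i) (xg (S i))
  + RInt (fun x => sumR M (fun k => sumR M (fun l => A i j k l x (yg (S j)) * vhat_top Ny (vm l) i j x (yg (S j))) * Sc k 1%nat i j x (yg (S j)))) (xg i) (xg (S i))
  = - (if Nat.eqb (S j) Ny then 0 else GY xg yg M A Sc D i j).
Proof.
  intros Hi Hj Hxg Hyg hA hsym hvp hvm hSc hD HDe.
  assert (Hx := Hxg i Hi). assert (Hy := Hyg j Hj).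
  assert (E0 : RInt (fun x => Fform M (A i j) (fun l => D l i j) (fun kk => Sc kk 1%nat i j) x (yg (S j))) (xg i) (xg (S i))
    = RInt (fun x => sumR M (fun k => sumR M (fun l => A i j k l x (yg (S j)) * Sc l 1%nat i j x (yg (S j))) * D k i j x (yg (S j)))) (xg i) (xg (S i))).
  { apply RInt_ext. intros x Hx'. rewrite Rmin_left, Rmax_right in Hx' by lra.
    unfold Fform.
    apply (sym_swap M (fun k l => A i j k l x (yg (S j))) (fun l => D l i j x (yg (S j)))
      (fun k => Sc k 1%nat i j x (yg (S j)))).
    intros; apply hsym; auto. split; lra. }
  rewrite E0. unfold vhat_top. cbv beta.
  destruct (Nat.eqb (S j) Ny) eqn:E.
  - rewrite !RInt_sum_zero2. lra.
  - assert (Hj' : (S j < Ny)%nat) by (apply Nat.eqb_neq in E; lia).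
    match goal with |- _ - _ - ?Lp + ?Lm = _ => assert (E1 : Lp - Lm = GY xg yg M A Sc D i j) end.
    { rewrite <- RInt_minus'; [| ctac ltac:(first [apply hA|apply hvp|apply hvm|apply hSc|apply hD]; lia) | ctac ltac:(first [apply hA|apply hvp|apply hvm|apply hSc|apply hD]; lia)].
      apply RInt_ext. intros x Hx'. rewrite Rmin_left, Rmax_right in Hx' by lra.
      rewrite (sum_diff2 M (fun k l => A i j k l x (yg (S j))) (fun l => vp l i (S j) x (yg (S j)))
         (fun l => vm l i (S j) x (yg (S j))) (fun l => D l i (S j) x (yg (S j)))
         (fun k => Sc k 1%nat i j x (yg (S j)))).
      2:{ intros; apply HDe. }
      apply (sym_swap M (fun k l => A i j k l x (yg (S j))) (fun l => D l i (S j) x (yg (S j)))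
        (fun k => Sc k 1%nat i j x (yg (S j)))).
      intros; apply hsym; auto. split; lra. }
    lra.
Qed.

Lemma cell_identity Nx Ny M (xg yg : nat -> R) (A : coefmat) dt (vp vc vm : nat -> dgfun)
  (Sp Sc Sm : nat -> nat -> dgfun) i j :
  (i < Nx)%nat -> (j < Ny)%nat ->
  (forall i, (i < Nx)%nat -> xg i < xg (S i)) ->
  (forall j, (j < Ny)%nat -> yg j < yg (S j)) ->
  (forall i j kk l, (i < Nx)%nat -> (j < Ny)%nat -> (kk < M)%nat -> (l < M)%nat -> c1 (A i j kk l)) ->
  (forall i j, (i < Nx)%nat -> (j < Ny)%nat -> forall x y, in_cell xg yg i j x y ->
     forall kk l, (kk < M)%nat -> (l < M)%nat -> A i j kk l x y = A i j l kk x y) ->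
  (forall kk i j, (kk < M)%nat -> (i < Nx)%nat -> (j < Ny)%nat -> c1 (vp kk i j)) ->
  (forall kk i j, (kk < M)%nat -> (i < Nx)%nat -> (j < Ny)%nat -> c1 (vc kk i j)) ->
  (forall kk i j, (kk < M)%nat -> (i < Nx)%nat -> (j < Ny)%nat -> c1 (vm kk i j)) ->
  (forall kk d i j, (kk < M)%nat -> (d < 2)%nat -> (i < Nx)%nat -> (j < Ny)%nat -> c1 (Sp kk d i j)) ->
  (forall kk d i j, (kk < M)%nat -> (d < 2)%nat -> (i < Nx)%nat -> (j < Ny)%nat -> c1 (Sc kk d i j)) ->
  (forall kk d i j, (kk < M)%nat -> (d < 2)%nat -> (i < Nx)%nat -> (j < Ny)%nat -> c1 (Sm kk d i j)) ->
  dt <> 0 ->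
  let D := fun kk i j x y => vp kk i j x y - vm kk i j x y in
  ldg_eq1 xg yg M A dt vm vc vp Sc D i j
  + ldg_eq2 Nx Ny xg yg M A vp Sp Sc i j
  - ldg_eq2 Nx Ny xg yg M A vm Sm Sc i j
  = (Qc xg yg M dt vp vc Sp Sc i j - Qc xg yg M dt vc vm Sc Sm i j)
    + ((if Nat.eqb i 0 then 0 else GX xg yg M A Sc D (Nat.pred i) j)
       - (if Nat.eqb (S i) Nx then 0 else GX xg yg M A Sc D i j))
    + ((if Nat.eqb j 0 then 0 else GY xg yg M A Sc D i (Nat.pred j))
       - (if Nat.eqb (S j) Ny then 0 else GY xg yg M A Sc D i j)).
Proof.
  intros Hi Hj Hxg Hyg hA hsym hvp hvc hvm hSp hSc hSm Hdt D.
  assert (hD : forall kk i j, (kk < M)%nat -> (i < Nx)%nat -> (j < Ny)%nat -> c1 (D kk i j)).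
  { intros. exact (c1_minus (vp kk i0 j0) (vm kk i0 j0) (hvp kk i0 j0 H H0 H1) (hvm kk i0 j0 H H0 H1)). }
  assert (HDe : forall kk i j x y, D kk i j x y = vp kk i j x y - vm kk i j x y) by reflexivity.
  assert (Hx := Hxg i Hi). assert (Hy := Hyg j Hj).
  pose proof (L_time M xg yg dt vp vc vm Sp Sc Sm D i j Hx Hy Hdt) as P1.
  pose proof (L_bulk M xg yg A vp vm Sc D i j Hx Hy) as P2.
  pose proof (L_left Nx Ny M xg yg A vp vm Sc D i j Hi Hj Hxg Hyg hA hsym hvp hvm hSc hD HDe) as P3.
  pose proof (L_right Nx Ny M xg yg A vp vm Sc D i j Hi Hj Hxg Hyg hA hsym hvp hvm hSc hD HDe) as P4.
  pose proof (L_bottom Nx Ny M xg yg A vp vm Sc D i j Hi Hj Hxg Hyg hA hsym hvp hvm hSc hD HDe) as P5.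
  pose proof (L_top Nx Ny M xg yg A vp vm Sc D i j Hi Hj Hxg Hyg hA hsym hvp hvm hSc hD HDe) as P6.
  specialize (P1 ltac:(intros; apply hvp; lia) ltac:(intros; apply hvc; lia) ltac:(intros; apply hvm; lia)
     ltac:(intros; apply hSp; lia) ltac:(intros; apply hSc; lia) ltac:(intros; apply hSm; lia)
     ltac:(intros; apply hD; lia) ltac:(intros; apply HDe)).
  specialize (P2 ltac:(intros; apply hA; lia) ltac:(intros; apply hsym; auto)
     ltac:(intros; apply hvp; lia) ltac:(intros; apply hvm; lia)
     ltac:(intros; apply hSc; lia) ltac:(intros; apply hD; lia) ltac:(intros; apply HDe)).
  unfold ldg_eq1, ldg_eq2. cbv zeta.
  lra.
Qed.

Lemma sumR_opp n f : sumR n (fun m => - f m) = - sumR n f.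
Proof. induction n; simpl; [lra|]. rewrite IHn; lra. Qed.

Lemma telescope N (g : nat -> R) :
  sumR N (fun i => (if Nat.eqb i 0 then 0 else g (Nat.pred i)) - (if Nat.eqb (S i) N then 0 else g i)) = 0.
Proof.
  rewrite sumR_minus.
  destruct N as [|N']; [simpl; lra|].
  assert (E1 : sumR (S N') (fun i => if Nat.eqb i 0 then 0 else g (Nat.pred i)) = sumR N' g).
  { rewrite sumR_shift. simpl. rewrite Rplus_0_l. reflexivity. }
  assert (E2 : sumR (S N') (fun i => if Nat.eqb (S i) (S N') then 0 else g i) = sumR N' g).
  { cbn [sumR]. rewrite Nat.eqb_refl. change (if true then 0 else g N') with 0.
    rewrite (sumR_ext N' (fun i => if Nat.eqb (S i) (S N') then 0 else g i) g). ring.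
    intros m Hm. destruct (Nat.eqb (S m) (S N')) eqn:E; auto.
    apply Nat.eqb_eq in E; lia. }
  rewrite E1, E2. ring.
Qed.

Lemma energy_sum Nx Ny M xg yg dt (va vb : nat -> dgfun) (Sa Sb : nat -> nat -> dgfun) :
  (forall i, (i < Nx)%nat -> xg i < xg (S i)) ->
  (forall j, (j < Ny)%nat -> yg j < yg (S j)) ->
  (forall kk i j, (kk < M)%nat -> (i < Nx)%nat -> (j < Ny)%nat -> c1 (va kk i j)) ->
  (forall kk i j, (kk < M)%nat -> (i < Nx)%nat -> (j < Ny)%nat -> c1 (vb kk i j)) ->
  (forall kk d i j, (kk < M)%nat -> (d < 2)%nat -> (i < Nx)%nat -> (j < Ny)%nat -> c1 (Sa kk d i j)) ->
  (forall kk d i j, (kk < M)%nat -> (d < 2)%nat -> (i < Nx)%nat -> (j < Ny)%nat -> c1 (Sb kk d i j)) ->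
  dt <> 0 ->
  l2sq Nx Ny xg yg M (fun k i j x y => (va k i j x y - vb k i j x y) / dt)
  + l2sq2 Nx Ny xg yg M (fun k d i j x y => (Sa k d i j x y + Sb k d i j x y) / 2)
  - dt ^ 2 / 4 * l2sq2 Nx Ny xg yg M (fun k d i j x y => (Sa k d i j x y - Sb k d i j x y) / dt)
  = sumR Nx (fun i => sumR Ny (fun j => Qc xg yg M dt va vb Sa Sb i j)).
Proof.
  intros Hxg Hyg ha hb hSa hSb Hdt.
  unfold l2sq, l2sq2.
  rewrite <- sumR_scal_l, <- sumR_plus, <- sumR_minus. apply sumR_ext; intros i Hi.
  rewrite <- sumR_scal_l, <- sumR_plus, <- sumR_minus. apply sumR_ext; intros j Hj.
  assert (Hx := Hxg i Hi). assert (Hy := Hyg j Hj).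
  rewrite <- cell_int_scal, <- cell_int_plus, <- cell_int_minus;
    ctac ltac:(first [apply ha|apply hb|apply hSa|apply hSb]; lia).
  unfold Qc. apply cell_int_ext; try lra. intros x y _. cbv beta.
  rewrite <- ?sumR_scal_l, <- ?sumR_plus, <- ?sumR_minus, <- ?sumR_plus.
  apply sumR_ext; intros kk Hk. simpl. field. auto.
Qed.

Theorem theorem3 (Nx Ny M k : nat) (xg yg : nat -> R) (A : coefmat) (dt : R)
  (v : nat -> nat -> dgfun) (Sh : nat -> nat -> nat -> dgfun) :
  (0 < Nx)%nat -> (0 < Ny)%nat ->
  (forall i, (i < Nx)%nat -> xg i < xg (S i)) ->
  (forall j, (j < Ny)%nat -> yg j < yg (S j)) ->
  (forall i j kk l, (i < Nx)%nat -> (j < Ny)%nat -> (kk < M)%nat -> (l < M)%nat ->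
     smooth2 (A i j kk l)) ->
  (forall i j, (i < Nx)%nat -> (j < Ny)%nat -> spd_on_cell xg yg M A i j) ->
  0 < dt ->
  (forall n, in_VhM Nx Ny M k (v n)) ->
  (forall n, in_VhM2 Nx Ny M k (Sh n)) ->
  (forall n, (1 <= n)%nat -> forall i j, (i < Nx)%nat -> (j < Ny)%nat ->
     forall p, in_VhM Nx Ny M k p ->
     ldg_eq1 xg yg M A dt (v (n - 1)%nat) (v n) (v (S n)) (Sh n) p i j = 0) ->
  (forall n i j, (i < Nx)%nat -> (j < Ny)%nat ->
     forall w, in_VhM2 Nx Ny M k w ->
     ldg_eq2 Nx Ny xg yg M A (v n) (Sh n) w i j = 0) ->
  forall n, (1 <= n)%nat ->
    energy Nx Ny xg yg M dt v Sh (S n) = energy Nx Ny xg yg M dt v Sh n.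
Proof.
  intros HNx HNy Hxg Hyg Hsm Hspd Hdt Hv HS Heq1 Heq2 n Hn.
  assert (hA : forall i j kk l, (i < Nx)%nat -> (j < Ny)%nat -> (kk < M)%nat -> (l < M)%nat -> c1 (A i j kk l)).
  { intros. apply smooth2_c1. apply Hsm; auto. }
  assert (hsym : forall i j, (i < Nx)%nat -> (j < Ny)%nat -> forall x y, in_cell xg yg i j x y ->
     forall kk l, (kk < M)%nat -> (l < M)%nat -> A i j kk l x y = A i j l kk x y).
  { intros i j Hi Hj x y Hc kk l Hk Hl. destruct (Hspd i j Hi Hj x y Hc) as [Hs _]. apply Hs; auto. }
  assert (hv : forall m kk i j, (kk < M)%nat -> (i < Nx)%nat -> (j < Ny)%nat -> c1 (v m kk i j)).
  { intros. apply (poly2_c1 k). apply Hv; auto. }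
  assert (hS : forall m kk d i j, (kk < M)%nat -> (d < 2)%nat -> (i < Nx)%nat -> (j < Ny)%nat -> c1 (Sh m kk d i j)).
  { intros. apply (poly2_c1 k). apply HS; auto. }
  assert (Hdt' : dt <> 0) by lra.
  set (D := fun kk i j x y => v (S n) kk i j x y - v (n - 1)%nat kk i j x y).
  assert (HD : in_VhM Nx Ny M k D).
  { intros m Hm i j Hi Hj. unfold D. apply poly2_minus; apply Hv; auto. }
  assert (Hcell : forall i j, (i < Nx)%nat -> (j < Ny)%nat ->
    0 = (Qc xg yg M dt (v (S n)) (v n) (Sh (S n)) (Sh n) i j - Qc xg yg M dt (v n) (v (n - 1)%nat) (Sh n) (Sh (n - 1)%nat) i j)
    + ((if Nat.eqb i 0 then 0 else GX xg yg M A (Sh n) D (Nat.pred i) j)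
       - (if Nat.eqb (S i) Nx then 0 else GX xg yg M A (Sh n) D i j))
    + ((if Nat.eqb j 0 then 0 else GY xg yg M A (Sh n) D i (Nat.pred j))
       - (if Nat.eqb (S j) Ny then 0 else GY xg yg M A (Sh n) D i j))).
  { intros i j Hi Hj.
    pose proof (cell_identity Nx Ny M xg yg A dt (v (S n)) (v n) (v (n - 1)%nat) (Sh (S n)) (Sh n) (Sh (n - 1)%nat) i j
      Hi Hj Hxg Hyg hA hsym (hv (S n)) (hv n) (hv (n - 1)%nat) (hS (S n)) (hS n) (hS (n - 1)%nat) Hdt') as CI.
    cbv zeta in CI. fold D in CI.
    rewrite (Heq1 n Hn i j Hi Hj D HD) in CI.
    rewrite (Heq2 (S n) i j Hi Hj (Sh n) (HS n)) in CI.
    rewrite (Heq2 (n - 1)%nat i j Hi Hj (Sh n) (HS n)) in CI.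
    lra. }
  unfold energy.
  replace (S n - 1)%nat with n by lia.
  rewrite (energy_sum Nx Ny M xg yg dt (v (S n)) (v n) (Sh (S n)) (Sh n) Hxg Hyg (hv (S n)) (hv n) (hS (S n)) (hS n) Hdt').
  rewrite (energy_sum Nx Ny M xg yg dt (v n) (v (n - 1)%nat) (Sh n) (Sh (n - 1)%nat) Hxg Hyg (hv n) (hv (n - 1)%nat) (hS n) (hS (n - 1)%nat) Hdt').
  assert (TX : sumR Nx (fun i => sumR Ny (fun j =>
       (if Nat.eqb i 0 then 0 else GX xg yg M A (Sh n) D (Nat.pred i) j)
       - (if Nat.eqb (S i) Nx then 0 else GX xg yg M A (Sh n) D i j))) = 0).
  { rewrite sumR_swap. rewrite (sumR_ext Ny _ (fun _ => 0)). apply sumR_zero.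
    intros j _. apply (telescope Nx (fun i => GX xg yg M A (Sh n) D i j)). }
  assert (TY : sumR Nx (fun i => sumR Ny (fun j =>
       (if Nat.eqb j 0 then 0 else GY xg yg M A (Sh n) D i (Nat.pred j))
       - (if Nat.eqb (S j) Ny then 0 else GY xg yg M A (Sh n) D i j))) = 0).
  { rewrite (sumR_ext Nx _ (fun _ => 0)). apply sumR_zero.
    intros i _. apply (telescope Ny (fun j => GY xg yg M A (Sh n) D i j)). }
  match goal with |- ?L = ?R =>
    match type of TX with ?XX = _ => match type of TY with ?YY = _ =>
      assert (Hsum : L - R + (XX + YY) = 0) end end end.
  { rewrite <- sumR_plus, <- sumR_minus, <- sumR_plus.
    transitivity (sumR Nx (fun _ => 0)); [|apply sumR_zero]. apply sumR_ext; intros i Hi.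
    rewrite <- sumR_plus, <- sumR_minus, <- sumR_plus.
    transitivity (sumR Ny (fun _ => 0)); [|apply sumR_zero]. apply sumR_ext; intros j Hj.
    specialize (Hcell i j Hi Hj). lra. }
  lra.
Qed.
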